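(* Let $T$ be an aperiodic invertible measure-preserving transformation of a standard probability space $(X,\mu)$, let $U$ be the unitary operator on $L^2(X,\mu)$ given by $Uf=f\circ T$, and let $\{n_k\}$ be any sequence of positive integers with $n_k\to\infty$. Then $U^{n_k}$ does not converge to the identity $I$ in operator norm, and the Ces\`aro averages $\frac1k\sum_{i=1}^k U^{n_i}$ do not converge to $I$ in operator norm.
   Context: $T$ is aperiodic if the set of periodic points of $T$ has measure zero. *)

(* Defs.v *)
From HB Require Import structures.
From mathcomp Require Import all_boot all_order all_algebra.
From mathcomp Require Import all_classical all_reals all_analysis.
Set Implicit Arguments. Unset Strict Implicit. Unset Printing Implicit Defensive.
Import Order.TTheory GRing.Theory Num.Theory.
Local Open Scope classical_set_scope.
Local Open Scope ring_scope.

(* (X, its sigma-algebra) is a standard Borel space: it is Borel-isomorphic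
   to a Borel subset of the real line (Kuratowski). *)
Definition standard_borel d (X : measurableType d) (R : realType) : Prop :=
  exists f : X -> R, injective f /\ measurable_fun setT f /\
    (forall A : set X, measurable A -> measurable (f @` A)).

Definition invertible_mpt d (X : measurableType d) (R : realType)
    (mu : {measure set X -> \bar R}) (T : X -> X) : Prop :=
  measurable_fun setT T /\
  (exists Ti : X -> X, cancel T Ti /\ cancel Ti T /\ measurable_fun setT Ti) /\
  (forall A : set X, measurable A -> mu (T @^-1` A) = mu A).

Definition periodic_points (X : Type) (T : X -> X) : set X :=
  [set x | exists n : nat, (0 < n)%N /\ iter n T x = x].

Definition aperiodic d (X : measurableType d) (R : realType)
    (mu : {measure set X -> \bar R}) (T : X -> X) : Prop :=
  mu.-negligible (periodic_points T).

(* closed unit ball of L^2(X, mu) (real scalars), represented by functions *)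
Definition L2_ball d (X : measurableType d) (R : realType)
    (mu : {measure set X -> \bar R}) : set (X -> R) :=
  [set f | measurable_fun setT f /\ (Lnorm mu 2%:E (EFin \o f) <= 1)%E].

Definition opnorm_dist_id d (X : measurableType d) (R : realType)
    (mu : {measure set X -> \bar R}) (A : (X -> R) -> (X -> R)) : \bar R :=
  ereal_sup [set Lnorm mu 2%:E (EFin \o (A f \- f)) | f in L2_ball mu].

Definition koopman_pow (X : Type) (R : realType) (T : X -> X) (n : nat)
    (f : X -> R) : X -> R := f \o iter n T.

(* Cesaro average (1/k) sum_{i=1}^k U^{n_i}, indexed by k.+1 (k >= 0),
   with the sequence n_1, n_2, ... written as n 0, n 1, ... *)
Definition cesaro_koopman (X : Type) (R : realType) (T : X -> X)
    (n : nat -> nat) (k : nat) (f : X -> R) : X -> R :=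
  fun x => (k.+1%:R)^-1 * \sum_(i < k.+1) koopman_pow T (n i) f x.

(* Main.v *)
From HB Require Import structures.
From mathcomp Require Import all_boot all_order all_algebra.
From mathcomp Require Import all_classical all_reals all_analysis.
From mathcomp Require Import ring lra measurable_realfun.
Require Import Defs.
Import Order.TTheory GRing.Theory Num.Theory.
Local Open Scope classical_set_scope.
Local Open Scope ring_scope.
Lemma sum_cos_tele (R : realType) (y : R) (M : nat) :
  2 * sin y * \sum_(t < M) cos (t.+1%:R * (2 * y)) =
  sin ((M.*2).+1%:R * y) - sin y.
Proof.
elim: M => [|M IH]; first by rewrite big_ord0 mulr0 /= mul1r subrr.
rewrite big_ord_recr /= mulrDr IH.
have e1 (N : nat) : ((N.*2).+1%:R : R) = 2 * N%:R + 1.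
  by rewrite -addn1 natrD -muln2 natrM mulrC.
have e2 : (M.+1%:R : R) = M%:R + 1 by rewrite -addn1 natrD.
have -> : (M.*2).+1%:R * y = M.+1%:R * (2 * y) - y.
  rewrite e1 e2; ring.
have -> : (M.+1.*2).+1%:R * y = M.+1%:R * (2 * y) + y.
  rewrite e1 e2; ring.
rewrite sinB sinD; ring.
Qed.

Lemma sum_cos_bound (R : realType) (y : R) (M : nat) : sin y != 0 ->
  `|\sum_(t < M) cos (t.+1%:R * (2 * y))| <= `|sin y|^-1.
Proof.
move=> s0.
have hs : 0 < `|sin y| by rewrite normr_gt0.
rewrite -[_^-1]mulr1 ler_pdivlMl //.
have h2 : `|2 * sin y * \sum_(t < M) cos (t.+1%:R * (2 * y))| <= 2.
  rewrite sum_cos_tele.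
  apply: (le_trans (ler_normB _ _)).
  have := sin_le1 ((M.*2).+1%:R * y); have := sin_geN1 ((M.*2).+1%:R * y).
  have := sin_le1 y; have := sin_geN1 y.
  move=> a b c e.
  have -> : (2:R) = 1 + 1 by [].
  apply: lerD; rewrite ler_norml; apply/andP; split => //.
rewrite normrM normrM (normr_idP (_ : 0 <= 2)) // in h2.
rewrite -mulrA in h2.
by rewrite -(@ler_pM2l _ 2) // mulr1.
Qed.
Lemma pt_ineq (R : realType) (K : nat) (a : R) (ai : 'I_K.+1 -> R) :
  1 - 2 * (K.+1%:R^-1 * \sum_i cos (ai i - a)) <=
  (K.+1%:R^-1 * \sum_i cos (ai i) - cos a) ^+ 2 +
  (K.+1%:R^-1 * \sum_i sin (ai i) - sin a) ^+ 2.
Proof.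
have -> : \sum_i cos (ai i - a) =
    cos a * \sum_i cos (ai i) + sin a * \sum_i sin (ai i).
  rewrite !mulr_sumr -big_split /=; apply: eq_bigr => i _.
  by rewrite cosB mulrC (mulrC (sin a)).
set P := K.+1%:R^-1 * \sum_i cos (ai i).
set Q := K.+1%:R^-1 * \sum_i sin (ai i).
have -> : K.+1%:R^-1 * (cos a * \sum_i cos (ai i) + sin a * \sum_i sin (ai i))
  = cos a * P + sin a * Q by rewrite /P /Q; ring.
have h := cos2Dsin2 a.
nra.
Qed.
Lemma combine (R : realType) (K M : nat) (e' : R) (A : 'I_M -> R)
  (Cc : 'I_M -> 'I_K.+1 -> R) (ind : 'I_K.+1 -> R) :
  (forall t, 1 - 2 * (K.+1%:R^-1 * \sum_i Cc t i) <= A t) ->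
  (forall i, \sum_t Cc t i <= M%:R * ind i + e') ->
  M%:R = 16 * e' ->
  M%:R * (7/8) <= \sum_t A t + \sum_i (2 * M%:R / K.+1%:R) * ind i.
Proof.
move=> hA hC hM.
have h1 : \sum_t (1 - 2 * (K.+1%:R^-1 * \sum_i Cc t i)) <= \sum_t A t.
  by apply: ler_sum => t _; exact: hA.
have e1 : \sum_t (1 - 2 * (K.+1%:R^-1 * \sum_i Cc t i)) =
    M%:R - 2 * (K.+1%:R^-1 * \sum_i \sum_t Cc t i).
  rewrite sumrB sumr_const card_ord; congr (_ - _).
  by rewrite exchange_big /= -!mulr_sumr.
have h2 : \sum_i \sum_t Cc t i <= M%:R * \sum_i ind i + K.+1%:R * e'.
  apply: (le_trans (y := \sum_i (M%:R * ind i + e'))).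
    apply: ler_sum => i _.
    exact: hC.
  by rewrite big_split /= -mulr_sumr sumr_const card_ord -[e' *+ _]mulr_natl.
rewrite -mulr_sumr.
set S := \sum_i \sum_t Cc t i in e1 h2.
set I := \sum_i ind i in h2 *.
set k := K.+1%:R in e1 h2 *.
have k0 : 0 < k by rewrite /k ltr0Sn.
have ki0 : 0 <= k^-1 by rewrite invr_ge0 ltW.
have h3 := ler_wpM2l ki0 h2.
have e2 : k^-1 * (k * e') = e' by rewrite mulrA mulVf ?mul1r // gt_eqF.
rewrite mulrDr e2 in h3.
rewrite e1 in h1.
have -> : 2 * M%:R / k * I = 2 * (k^-1 * (M%:R * I)) by ring.
set x := k^-1 * S in h1 h3. set y := k^-1 * (M%:R * I) in h3 *. lra.
Qed.
Section Main.
Context d (X : measurableType d) (R : realType) (mu : probability X R)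
  (T : X -> X) (phi : X -> R).
Hypothesis mT : measurable_fun setT T.
Hypothesis mphi : measurable_fun setT phi.
Hypothesis phi_inj : injective phi.
Hypothesis phi_bd : forall x, -(pi/2) < phi x < pi/2.
Hypothesis aper : mu.-negligible (periodic_points T).

Lemma miter m : measurable_fun setT (iter m T).
Proof.
elim: m => [|m IH] /=; first exact: measurable_id.
exact: (measurableT_comp mT IH).
Qed.

Definition ps m x := sin ((phi (iter m T x) - phi x) / 2).

Lemma mps m : measurable_fun setT (ps m).
Proof.
have hg : measurable_fun setT (fun x => (phi (iter m T x) - phi x) / 2).
  apply: measurable_funM => //.
  apply: measurable_funB => //.
  exact: (measurableT_comp mphi (miter m)).
have hs : measurable_fun setT (@sin R) := continuous_measurable_fun (@continuous_sin R).
exact: (measurableT_comp hs hg).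
Qed.

Definition E m (e : R) := [set x | `|ps m x| < e].

Lemma mE m e : measurable (E m e).
Proof.
have hn : measurable_fun setT (fun x => `|ps m x|).
  exact: (measurableT_comp (@normr_measurable R setT) (mps m)).
have := hn measurableT _ (measurable_itv `]-oo, e[).
rewrite setTI; congr measurable; apply/seteqP; split => x /=;
  by rewrite in_itv /=.
Qed.

Lemma ps0 m x : (0 < m)%N -> ps m x = 0 -> periodic_points T x.
Proof.
move=> m0; rewrite /ps => hs.
set y := (phi (iter m T x) - phi x) / 2 in hs.
have hy : - (pi / 2) < y < pi / 2.
  have := phi_bd x; have := phi_bd (iter m T x); rewrite /y.
  move=> /andP[a b] /andP[c e]; apply/andP; split; lra.
have hpi := pi_gt0 R.
have y0 : y = 0.
  case: (ltgtP y 0) => // hy0.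
  - have : 0 < sin (- y) by apply: sin_gt0_pi; apply/andP; split;
      move: hy => /andP[a b]; lra.
    by rewrite sinN hs oppr0 ltxx.
  - have : 0 < sin y by apply: sin_gt0_pi; apply/andP; split;
      move: hy => /andP[a b]; lra.
    by rewrite hs ltxx.
rewrite /periodic_points /=; exists m; split => //; apply: phi_inj.
move: y0; rewrite /y => /eqP; rewrite mulf_eq0 invr_eq0 subr_eq0.
case/orP => [/eqP -> //|/eqP h2]; lra.
Qed.

Lemma E_sub m e e' : e <= e' -> E m e `<=` E m e'.
Proof. by move=> h x /= hx; exact: lt_le_trans hx h. Qed.

Lemma small_set m : (0 < m)%N -> exists j : nat, (mu (E m j.+1%:R^-1) <= (16^-1)%:E)%E.
Proof.
move=> m0.
pose F j := E m j.+1%:R^-1.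
have mF j : measurable (F j) by exact: mE.
have niF : nonincreasing_seq F.
  move=> a b ab; rewrite subsetEset; apply: E_sub.
  by rewrite lef_pV2 ?posrE ?ltr0Sn // ler_nat ltnS.
have capF : \bigcap_j F j `<=` [set x | ps m x = 0].
  move=> x hx /=; apply/eqP; apply/negPn/negP => hne.
  have hp : 0 < `|ps m x| by rewrite normr_gt0.
  set j := Num.truncn (`|ps m x|^-1).
  have := hx j I; rewrite /F /E /= => hlt.
  have h2 : `|ps m x|^-1 < j.+1%:R := truncnS_gt _.
  move: hlt; rewrite -[`|ps m x|]invrK ltf_pV2 ?posrE ?invr_gt0 ?ltr0Sn // => h1.
  by have := lt_trans h1 h2; rewrite ltxx.
have [N [mN N0 hN]] := aper.
have mcap : measurable (\bigcap_j F j) by exact: bigcapT_measurable.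
have cap0 : mu (\bigcap_j F j) = 0.
  apply/eqP; rewrite eq_le measure_ge0 andbT -N0.
  apply: le_measure; rewrite ?inE //.
  by move=> x /capF /= h; apply: hN; exact: (@ps0 m x m0 h).
have F0 : (mu (F 0%N) < +oo)%E.
  by apply: le_lt_trans (probability_le1 _ (mF 0%N)) _; exact: ltry.
have hcvg : mu \o F @ \oo --> 0%E.
  by rewrite -cap0; exact: nonincreasing_cvg_mu F0 mF mcap niF.
have : \forall j \near \oo, (mu (F j) < (16^-1)%:E)%E.
  have hA : nbhs (0%E : \bar R) (fun u => u < (16^-1)%:E)%E.
    by apply: open_ereal_lt'; rewrite lte_fin invr_gt0.
  exact: (hcvg _ hA).
case => J _ hJ; exists J; apply/ltW; exact: (hJ J (leqnn J)).
Qed.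

Definition Bop K (m : nat -> nat) (h : X -> R) x :=
  K.+1%:R^-1 * \sum_(i < K.+1) h (iter (m i) T x).

Lemma pw_i m (eta : R) (M : nat) x : 0 < eta ->
  \sum_(t < M) cos (t.+1%:R * (2 * ((phi (iter m T x) - phi x) / 2)))
    <= M%:R * \1_(E m eta) x + eta^-1.
Proof.
move=> he; rewrite indicE.
have hei : 0 < eta^-1 by rewrite invr_gt0.
case: (boolP (x \in E m eta)) => hx.
  have : \sum_(t < M) cos (t.+1%:R * (2 * ((phi (iter m T x) - phi x) / 2)))
      <= \sum_(t < M) (1:R) by apply: ler_sum => t _; exact: cos_le1.
  rewrite sumr_const card_ord mulr1 => h; lra.
rewrite mulr0 add0r.
have hx' : eta <= `|ps m x|.
  rewrite leNgt; apply/negP => h; move/negP: hx; apply.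
  by rewrite in_setE.
have s0 : sin ((phi (iter m T x) - phi x) / 2) != 0.
  by rewrite -normr_gt0; exact: lt_le_trans he hx'.
apply: (le_trans (ler_norm _)).
apply: (le_trans (@sum_cos_bound _ _ M s0)).
by rewrite lef_pV2 ?posrE ?normr_gt0.
Qed.

Lemma mBop K m (h : X -> R) : measurable_fun setT h -> measurable_fun setT (Bop K m h).
Proof.
move=> mh; rewrite /Bop; apply: measurable_funM => //.
apply: measurable_sum => i; exact: (measurableT_comp mh (miter _)).
Qed.

Lemma key (K : nat) (m : nat -> nat) : (forall i, (0 < m i)%N) ->
  exists h : X -> R, measurable_fun setT h /\ (forall x, `|h x| <= 1) /\
    ((5^-1)%:E <= \int[mu]_x (((Bop K m h x - h x) ^+ 2)%:E))%E.
Proof.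
move=> hm.
have [j hj] : {j : nat -> nat &
    forall i, (mu (E (m i) (j i).+1%:R^-1) <= (16^-1)%:E)%E}.
  apply: (@choice _ _ (fun i j => (mu (E (m i) j.+1%:R^-1) <= (16^-1)%:E)%E)) => i.
  exact: small_set.
pose J := \max_(i < K.+1) j i.
pose eta : R := J.+1%:R^-1.
have he : 0 < eta by rewrite invr_gt0 ltr0Sn.
have hE (i : 'I_K.+1) : (mu (E (m i) eta) <= (16^-1)%:E)%E.
  apply: le_trans (hj i).
  apply: le_measure; rewrite ?inE; [exact: mE|exact: mE|].
  apply: E_sub; rewrite lef_pV2 ?posrE ?ltr0Sn // ler_nat ltnS.
  exact: (leq_bigmax i).
pose M := (16 * J.+1)%N.
pose C t x := cos (t.+1%:R * phi x).
pose Sn t x := sin (t.+1%:R * phi x).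
have mlin t : measurable_fun setT (fun x => t.+1%:R * phi x).
  by apply: measurable_funM.
have mC t : measurable_fun setT (C t).
  exact: (measurableT_comp (continuous_measurable_fun (@continuous_cos R)) (mlin t)).
have mS t : measurable_fun setT (Sn t).
  exact: (measurableT_comp (continuous_measurable_fun (@continuous_sin R)) (mlin t)).
have mB h : measurable_fun setT h ->
    measurable_fun setT (fun x => (Bop K m h x - h x) ^+ 2).
  move=> mh; apply: measurable_funX; apply: measurable_funB => //.
  exact: mBop.
pose a t x := (Bop K m (C t) x - C t x) ^+ 2.
pose b t x := (Bop K m (Sn t) x - Sn t x) ^+ 2.
have [[t ht]|Hno] := pselect (exists t : 'I_M,
   ((5^-1)%:E <= \int[mu]_x (a t x)%:E)%E \/
   ((5^-1)%:E <= \int[mu]_x (b t x)%:E)%E).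
  case: ht => ht; [exists (C t) | exists (Sn t)]; (split; [by []|split => //]).
    by move=> x; rewrite ler_norml cos_geN1 cos_le1.
  by move=> x; rewrite ler_norml sin_geN1 sin_le1.
exfalso.
have Hlt (t : 'I_M) : ((\int[mu]_x (a t x)%:E) <= (5^-1)%:E)%E /\
    ((\int[mu]_x (b t x)%:E) <= (5^-1)%:E)%E.
  split; apply/ltW; rewrite ltNge; apply/negP => h; apply: Hno; exists t;
    [left|right]; exact: h.
have pw x : M%:R * (7/8) <= \sum_(t < M) (a t x + b t x) +
    \sum_(i < K.+1) (2 * M%:R / K.+1%:R) * \1_(E (m i) eta) x.
  apply: (@combine R K M eta^-1 _
    (fun t i => cos (t.+1%:R * (2 * ((phi (iter (m i) T x) - phi x) / 2)))) _).
  - move=> t.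
    have := @pt_ineq R K (t.+1%:R * phi x) (fun i : 'I_K.+1 => t.+1%:R * phi (iter (m i) T x)).
    rewrite (eq_bigr (fun i : 'I_K.+1 =>
      cos (t.+1%:R * (2 * ((phi (iter (m i) T x) - phi x) / 2))))); first by [].
    by move=> i _; congr cos; field.
  - by move=> i; exact: pw_i.
  - by rewrite /M natrM /eta invrK.
have ma t : measurable_fun setT (fun x => (a t x)%:E).
  by apply/measurable_EFinP; exact: (mB _ (mC t)).
have mb t : measurable_fun setT (fun x => (b t x)%:E).
  by apply/measurable_EFinP; exact: (mB _ (mS t)).
have a0 t x : (0 <= (a t x)%:E)%E by rewrite lee_fin sqr_ge0.
have b0 t x : (0 <= (b t x)%:E)%E by rewrite lee_fin sqr_ge0.
pose c : R := 2 * M%:R / K.+1%:R.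
have c0 : 0 <= c by rewrite /c divr_ge0 // mulr_ge0.
have mi i : measurable_fun setT (fun x => (c * \1_(E (m i) eta) x)%:E).
  apply/measurable_EFinP; apply: measurable_funM => //.
  exact: measurable_indic (mE _ _).
have i0 i x : (0 <= (c * \1_(E (m i) eta) x)%:E)%E.
  by rewrite lee_fin mulr_ge0.
have mab t : measurable_fun setT (fun x => (a t x)%:E + (b t x)%:E)%E.
  exact: emeasurable_funD.
have ab0 t x : (0 <= (a t x)%:E + (b t x)%:E)%E by rewrite adde_ge0.
have mF1 : measurable_fun setT
    (fun x => \sum_(t < M) ((a t x)%:E + (b t x)%:E))%E.
  by apply: emeasurable_sum => t; exact: mab.
have mF2 : measurable_fun setT
    (fun x => \sum_(i < K.+1) (c * \1_(E (m i) eta) x)%:E)%E.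
  by apply: emeasurable_sum => i; exact: mi.
have F10 x : (0 <= \sum_(t < M) ((a t x)%:E + (b t x)%:E))%E.
  by apply: sume_ge0 => t _.
have F20 x : (0 <= \sum_(i < K.+1) (c * \1_(E (m i) eta) x)%:E)%E.
  by apply: sume_ge0 => i _.
have hI : ((M%:R * (7/8))%:E <= \int[mu]_x
    (\sum_(t < M) ((a t x)%:E + (b t x)%:E) +
     \sum_(i < K.+1) (c * \1_(E (m i) eta) x)%:E))%E.
  rewrite -[X in (X <= _)%E]mule1 -(probability_setT mu) -integral_cst //.
  apply: ge0_le_integral => //.
  - by move=> x _; rewrite /= lee_fin mulr_ge0.
  - exact: emeasurable_funD.
  - move=> x _ /=.
    have -> : (\sum_(t < M) ((a t x)%:E + (b t x)%:E) =
        (\sum_(t < M) (a t x + b t x))%:E)%E.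
      by rewrite -sumEFin; apply: eq_bigr.
    by rewrite sumEFin -EFinD lee_fin; exact: pw.
rewrite ge0_integralD // in hI; try (by move=> x _; exact: F10);
  try (by move=> x _; exact: F20).
rewrite (@ge0_integral_sum _ _ _ mu setT measurableT 'I_M
  (fun t x => (a t x)%:E + (b t x)%:E)%E (fun t => mab t)
  (fun t x _ => ab0 t x)) in hI.
rewrite (@ge0_integral_sum _ _ _ mu setT measurableT 'I_K.+1
  (fun i x => (c * \1_(E (m i) eta) x)%:E) (fun i => mi i)
  (fun i x _ => i0 i x)) in hI.
have hS1 : (\sum_(k < M) (\int[mu]_x ((a k x)%:E + (b k x)%:E))%E
    <= (M%:R * (2/5))%:E)%E.
  apply: (le_trans (y := (\sum_(k < M) ((2/5 : R)%:E))%E)).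
    apply: lee_sum => t _.
    rewrite ge0_integralD //; try (by move=> x _; exact: a0);
      try (by move=> x _; exact: b0).
    have [h1 h2] := Hlt t.
    have -> : ((2/5 : R)%:E = (5^-1)%:E + (5^-1)%:E)%E.
      by rewrite -EFinD; congr EFin; field.
    exact: leeD.
  by rewrite sumEFin sumr_const card_ord lee_fin -[_ *+ M]mulr_natl.
have hS2 : (\sum_(k < K.+1) (\int[mu]_x (c * \1_(E (m k) eta) x)%:E)%E
    <= (K.+1%:R * (c / 16))%:E)%E.
  apply: (le_trans (y := (\sum_(k < K.+1) ((c / 16 : R)%:E))%E)).
    apply: lee_sum => i _.
    under eq_integral do rewrite EFinM.
    rewrite ge0_integralZl_EFin //;
      try (by move=> x _; rewrite lee_fin indic_ge0);
      try (by apply/measurable_EFinP; exact: measurable_indic (mE _ _)).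
    rewrite integral_indic //; last exact: mE.
    rewrite setIT.
    rewrite EFinM; exact: lee_wpmul2l (hE i).
  by rewrite sumEFin sumr_const card_ord lee_fin -[_ *+ K.+1]mulr_natl.
have := le_trans hI (leeD hS1 hS2).
rewrite -EFinD lee_fin.
have e : K.+1%:R * (c / 16) = M%:R / 8 by rewrite /c; field.
rewrite e.
have M0 : (0 : R) < M%:R by rewrite ltr0n /M muln_gt0.
lra.
Qed.

Lemma Lnorm_sq (g : X -> R) :
  ((Lnorm mu 2%:E (EFin \o g)) `^ 2 = \int[mu]_x ((g x) ^+ 2)%:E)%E.
Proof.
rewrite poweR_Lnorm //; apply: eq_integral => x _ /=.
by rewrite powR_mulrn ?normr_ge0 // real_normK // num_real.
Qed.

Lemma Lnorm_ge (g : X -> R) :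
  ((5^-1)%:E <= \int[mu]_x ((g x) ^+ 2)%:E)%E ->
  ((3^-1)%:E <= Lnorm mu 2%:E (EFin \o g))%E.
Proof.
rewrite -Lnorm_sq.
have := Lnorm_ge0 mu 2%:E (EFin \o g).
case: (Lnorm mu 2%:E (EFin \o g)) => [l| |] //.
- move=> l0 h; rewrite poweR_EFin lee_fin in h; rewrite lee_fin in l0 *.
  rewrite powR_mulrn // expr2 in h; rewrite leNgt; apply/negP => hl.
  rewrite ?lte_fin in hl; have := ler_wpM2l l0 (ltW hl); nra.
- by move=> _ _; exact: leey.
Qed.

Lemma Lnorm_le1 (g : X -> R) :
  (\int[mu]_x ((g x) ^+ 2)%:E <= 1)%E ->
  (Lnorm mu 2%:E (EFin \o g) <= 1)%E.
Proof.
rewrite -Lnorm_sq.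
have := Lnorm_ge0 mu 2%:E (EFin \o g).
case: (Lnorm mu 2%:E (EFin \o g)) => [l| |] //.
- move=> l0 h; rewrite poweR_EFin lee_fin in h; rewrite lee_fin in l0 *.
  rewrite powR_mulrn // expr2 in h; rewrite leNgt; apply/negP => hl.
  rewrite ?lte_fin in hl; have := ler_wpM2l l0 (ltW hl); nra.
- by move=> _; rewrite poweRyr.
Qed.

Lemma opn_bound K m (A : (X -> R) -> (X -> R)) : (forall i, (0 < m i)%N) ->
  (forall h x, A h x = Bop K m h x) ->
  ((3^-1)%:E <= opnorm_dist_id mu A)%E.
Proof.
move=> hm hA.
have [h [mh [h1 hI]]] := @key K m hm.
have hball : L2_ball mu h.
  split => //; apply: Lnorm_le1.
  rewrite -[X in (_ <= X)%E](probability_setT mu) -[X in (_ <= X)%E]mul1e.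
  rewrite -integral_cst //.
  apply: ge0_le_integral => //.
  - by move=> x _; rewrite lee_fin sqr_ge0.
  - by apply/measurable_EFinP; exact: measurable_funX.
  - move=> x _ /=; rewrite lee_fin.
    have := h1 x; rewrite ler_norml => /andP[a b]; nra.
have hsup : (Lnorm mu 2%:E (EFin \o (A h \- h)%R) <=
    opnorm_dist_id mu A)%E.
  by apply: ereal_sup_ubound; exists h.
apply: le_trans hsup; apply: Lnorm_ge.
by under eq_integral do rewrite /= hA.
Qed.

End Main.

Theorem mainTheorem5 (d : measure_display) (X : measurableType d) (R : realType)
    (mu : probability X R) (T : X -> X) (n : nat -> nat) :
  standard_borel X R ->
  invertible_mpt mu T ->
  aperiodic mu T ->
  (forall k, (0 < n k)%N) ->
  (forall M : nat, exists K : nat, forall k, (K <= k)%N -> (M <= n k)%N) ->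
  ~ ((fun k => opnorm_dist_id mu (koopman_pow T (n k))) @ \oo --> 0%E) /\
  ~ ((fun k => opnorm_dist_id mu (cesaro_koopman T n k)) @ \oo --> 0%E).
Proof.
move=> [f [finj [mf _]]] [mT _] aper npos _.
pose phi := atan \o f.
have mphi : measurable_fun setT phi.
  exact: (measurableT_comp (continuous_measurable_fun (fun x => @continuous_atan R x)) mf).
have phi_inj : injective phi.
  by move=> x y /(can_inj (@atanK R)) /finj.
have phi_bd x : -(pi/2) < phi x < pi/2.
  by rewrite atan_gtNpi2 atan_ltpi2.
have nocvg (u : nat -> \bar R) : (forall k, ((3^-1)%:E <= u k)%E) ->
    ~ (u @ \oo --> 0%E).
  move=> hu hc.
  have hn : \forall k \near \oo, ((3^-1)%:E <= u k)%E.
    by exists 0%N => // k _; exact: hu.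
  have h0 := cvge_to_ge hc hn.
  have h1 := h0 eventually_filter.
  by move: h1; rewrite lee_fin leNgt invr_gt0 ltr0n.
split; apply: nocvg => k.
- apply: (@opn_bound _ _ _ mu T phi mT mphi phi_inj phi_bd aper 0%N (fun _ => n k)) => //.
  by move=> h x; rewrite /Bop big_ord1 invr1 mul1r.
- exact: (@opn_bound _ _ _ mu T phi mT mphi phi_inj phi_bd aper k n).
Qed.
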